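(* Let $n\ge 2$, let $\mathcal A$ be a maximal commutative subalgebra of $\mathcal M_d(\mathbb C)$, and let $A,B,A',B'\in\mathcal A$ satisfy $\ker A\cap\ker B=\{0\}$ and $\ker A'\cap\ker B'=\{0\}$. Then $\mathcal F_{A,B}^{\mathcal A}=\mathcal F_{A',B'}^{\mathcal A}$ if and only if $AB'=A'B$.
   Context: For $A,B\in\mathcal A$, $\mathcal F_{A,B}^{\mathcal A}$ is the set of $n\times n$ block Toeplitz matrices $(T_{p-q})_{p,q=0}^{n-1}$ with all $T_j\in\mathcal A$ ($-(n-1)\le j\le n-1$) and $AT_j=BT_{j-n}$ for $j=1,\dots,n-1$. *)

(* Defs.v *)
From HB Require Import structures.
From mathcomp Require Import all_boot all_order all_algebra.
Set Implicit Arguments. Unset Strict Implicit. Unset Printing Implicit Defensive.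
Import Order.TTheory GRing.Theory Num.Theory.
Local Open Scope ring_scope.

Section Defs.
Variables (C : numClosedFieldType) (d : nat).
Notation Md := 'M[C]_d.

Definition is_subalgebra (S : Md -> Prop) : Prop :=
  [/\ S 1%:M,
      (forall X Y, S X -> S Y -> S (X + Y)),
      (forall (c : C) X, S X -> S (c *: X)) &
      (forall X Y, S X -> S Y -> S (X *m Y))].

Definition is_commutative_set (S : Md -> Prop) : Prop :=
  forall X Y, S X -> S Y -> X *m Y = Y *m X.

Definition is_comm_subalgebra (S : Md -> Prop) : Prop :=
  is_subalgebra S /\ is_commutative_set S.

Definition is_maximal_comm_subalgebra (S : Md -> Prop) : Prop :=
  is_comm_subalgebra S /\
  forall T : Md -> Prop, is_comm_subalgebra T ->
    (forall X, S X -> T X) -> forall X, T X -> S X.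

Definition trivial_common_kernel (A B : Md) : Prop :=
  forall v : 'cV[C]_d, A *m v = 0 -> B *m v = 0 -> v = 0.

Definition block_toeplitz (n : nat) (T : int -> Md) : 'M[Md]_n :=
  \matrix_(p < n, q < n) T (p%:Z - q%:Z).

Definition F_set (n : nat) (S : Md -> Prop) (A B : Md) (M : 'M[Md]_n) : Prop :=
  exists T : int -> Md,
    [/\ M = block_toeplitz n T,
        (forall j : int, - (n%:Z - 1) <= j <= n%:Z - 1 -> S (T j)) &
        (forall j : int, 1 <= j <= n%:Z - 1 -> A *m T j = B *m T (j - n%:Z))].
End Defs.

(* Main.v *)
Require Import Defs.
From HB Require Import structures.
From mathcomp Require Import all_boot all_order all_algebra.
From mathcomp Require Import zify.
Import Order.TTheory GRing.Theory Num.Theory.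
Local Open Scope ring_scope.

Lemma key (C : numClosedFieldType) (d : nat) (S : 'M[C]_d -> Prop)
  (hc : is_commutative_set S) (A B A' B' : 'M[C]_d)
  (hA : S A) (hB : S B) (hA' : S A') (hB' : S B')
  (hAB : trivial_common_kernel A B) (e : A *m B' = A' *m B)
  (X Y : 'M[C]_d) (hX : S X) (hY : S Y) :
  A *m X = B *m Y -> A' *m X = B' *m Y.
Proof.
move=> eXY; apply/eqP; rewrite -subr_eq0; apply/eqP.
set W := A' *m X - B' *m Y.
have h1 : A *m W = 0.
  rewrite /W mulmxBr !mulmxA (hc _ _ hA hA') e.
  by rewrite -[A' *m A *m X]mulmxA eXY mulmxA subrr.
have h2 : B *m W = 0.
  rewrite /W mulmxBr !mulmxA (hc _ _ hB hA') -e (hc _ _ hA hB').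
  by rewrite -[B' *m A *m X]mulmxA eXY mulmxA (hc _ _ hB' hB) subrr.
clearbody W.
apply/matrixP => i j.
have hc0 : col j W = 0 by apply: hAB; rewrite colE mulmxA ?h1 ?h2 mul0mx.
by have := congr1 (fun v : 'cV[C]_d => v i 0) hc0; rewrite !mxE.
Qed.
Arguments key {C d S}.


Lemma incl (C : numClosedFieldType) (d n : nat) (S : 'M[C]_d -> Prop)
  (hc : is_commutative_set S) (A B A' B' : 'M[C]_d)
  (hA : S A) (hB : S B) (hA' : S A') (hB' : S B')
  (hAB : trivial_common_kernel A B) (e : A *m B' = A' *m B) M :
  @F_set C d n S A B M -> @F_set C d n S A' B' M.
Proof.
case=> T [eM hT hj]; exists T; split => // j hj1.
have hr2 : - (n%:Z - 1) <= j - n%:Z <= n%:Z - 1.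
  by move: hj1 => /andP [h1 h2]; apply/andP; split; lia.
have hr1 : - (n%:Z - 1) <= j <= n%:Z - 1.
  by move: hj1 => /andP [h1 h2]; apply/andP; split; lia.
apply: (key hc A B A' B' hA hB hA' hB' hAB e _ _) (hT _ hr1) (hT _ hr2) (hj _ hj1).
Qed.
Arguments incl {C d n S}.


Theorem theorem4p6 (C : numClosedFieldType) (d n : nat) (hn : (2 <= n)%N)
  (S : 'M[C]_d -> Prop) (hS : is_maximal_comm_subalgebra S)
  (A B A' B' : 'M[C]_d) (hA : S A) (hB : S B) (hA' : S A') (hB' : S B')
  (hAB : trivial_common_kernel A B) (hAB' : trivial_common_kernel A' B') :
  (forall M : 'M['M[C]_d]_n, @F_set C d n S A B M <-> @F_set C d n S A' B' M)
  <-> A *m B' = A' *m B.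
Proof.
have hc : is_commutative_set S by case: hS => [[]].
split; last first.
  move=> e M; split; first exact: incl.
  apply: incl => //; by rewrite (hc _ _ hA' hB) -e (hc _ _ hA hB').
move=> H.
pose T0 := fun j : int => if 0 < j then B else A.
have hF : @F_set C d n S A B (block_toeplitz n T0).
  exists T0; split => //.
    by move=> j _; rewrite /T0; case: ifP.
  move=> j /andP [h1 h2].
  have -> : T0 j = B by rewrite /T0 ifT //; lia.
  have -> : T0 (j - n%:Z) = A by rewrite /T0 ifF //; lia.
  exact: hc.
have [T' [eM hT' hj']] := (H _).1 hF.
have h1n : (1 < n)%N by [].
have h0n : (0 < n)%N by lia.
have hpn : ((n - 1)%N < n)%N by lia.
have e1 := congr1 (fun M : 'M_n => M (Ordinal h1n) (Ordinal h0n)) eM.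
have e2 := congr1 (fun M : 'M_n => M (Ordinal h0n) (Ordinal hpn)) eM.
move: e1 e2; rewrite /block_toeplitz !mxE /=.
move=> e1 e2.
have eB : T' 1 = B by rewrite -(subr0 (1:int)) -e1.
have en : (0%:Z - ((n - 1)%N)%:Z) = 1 - n%:Z by rewrite -(subzn h0n) sub0r opprB.
rewrite en in e2.
have eA : T' (1 - n%:Z) = A.
  by rewrite -e2 /T0 ifF //; lia.
have h1r : 1 <= (1:int) <= n%:Z - 1 by apply/andP; split; lia.
have ea := hj' 1 h1r.
rewrite eB eA in ea.
by rewrite (hc _ _ hA hB') -ea (hc _ _ hA' hB).
Qed.
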